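(* Let $k>0$ be real, let $M=\begin{bmatrix} k-1 & k-1 & k\\ 1&0&0\\ 0&1&0\end{bmatrix}$ and $N_0=\begin{bmatrix} k-1 & 2k & 2k\\ 2 & 1-k & 2\\ \frac{2}{k} & \frac{2}{k} & -\frac{1}{k}(k^2+k-2)\end{bmatrix}$. For integers $n\ge1$ put $\mathbf{j}_n=N_0M^n$, and define $$\mathbf{j}_{-n}=\begin{bmatrix} j_{-(n-1)} & t_{-(n+1)} & kj_{-n}\\ j_{-n} & t_{-(n+2)} & kj_{-(n+1)}\\ j_{-(n+1)} & t_{-(n+3)} & kj_{-(n+2)}\end{bmatrix},$$ where $t_{-m}=(k-1)j_{-(m-1)}+kj_{-m}$ for every integer $m$. Then for every integer $n\ge1$, $$\mathbf{j}_{-n}=M^{-n}N_0=N_0M^{-n}\qquad\text{and}\qquad \left(\mathbf{j}_n\right)^{-1}=N_0^{-1}\,\mathbf{j}_{-n}\,N_0^{-1}.$$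
   Context: For real $k>0$, the third-order $k$-Jacobsthal--Lucas sequence $(j_n)$ is defined by $j_0=2$, $j_1=k-1$, $j_2=k^2+1$ and $j_{n+3}=(k-1)j_{n+2}+(k-1)j_{n+1}+kj_n$, and extended to negative indices by the backward recurrence $j_{-n}=\frac{1-k}{k}j_{-(n-1)}+\frac{1-k}{k}j_{-(n-2)}+\frac{1}{k}j_{-(n-3)}$ for $n\ge1$. *)

(* Defs.v *)
From HB Require Import structures.
From mathcomp Require Import all_boot all_order all_algebra.
Set Implicit Arguments. Unset Strict Implicit. Unset Printing Implicit Defensive.
Import Order.TTheory GRing.Theory Num.Theory.
Local Open Scope ring_scope.

Section JL.
Variable R : realFieldType.
Variable k : R.

Fixpoint jpos (n : nat) : R :=
  match n with
  | 0 => 2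
  | 1 => k - 1
  | 2 => k ^+ 2 + 1
  | ((a.+1 as b).+1 as c).+1 =>
      (k - 1) * jpos c + (k - 1) * jpos b + k * jpos a
  end.

Fixpoint jneg (n : nat) : R :=
  match n with
  | 0 => 2
  | 1 => (1 - k) / k * jpos 0 + (1 - k) / k * jpos 1 + 1 / k * jpos 2
  | (0.+1 as b).+1 => (1 - k) / k * jneg b + (1 - k) / k * jpos 0 + 1 / k * jpos 1
  | ((a.+1 as b).+1 as c).+1 =>
      (1 - k) / k * jneg c + (1 - k) / k * jneg b + 1 / k * jneg a
  end.

Definition jz (z : int) : R :=
  match z with
  | Posz n => jpos n
  | Negz n => jneg n.+1
  end.

Definition tneg (m : int) : R := (k - 1) * jz (- (m - 1)) + k * jz (- m).

Definition mx3 (a b c d e f g h i : R) : 'M[R]_3 :=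
  \matrix_(r < 3, s < 3)
    nth 0 (nth [::] [:: [:: a; b; c]; [:: d; e; f]; [:: g; h; i]] r) s.

Definition Mk : 'M[R]_3 := mx3 (k - 1) (k - 1) k  1 0 0  0 1 0.

Definition N0 : 'M[R]_3 :=
  mx3 (k - 1) (2 * k) (2 * k)
      2 (1 - k) 2
      (2 / k) (2 / k) (- (1 / k) * (k ^+ 2 + k - 2)).

Definition jmx_pos (n : nat) : 'M[R]_3 := N0 *m (Mk ^+ n).

Definition jmx_neg (n : nat) : 'M[R]_3 :=
  let z := n%:Z in
  mx3 (jz (- (z - 1))) (tneg (z + 1)) (k * jz (- z))
      (jz (- z))       (tneg (z + 2)) (k * jz (- (z + 1)))
      (jz (- (z + 1))) (tneg (z + 3)) (k * jz (- (z + 2))).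

End JL.

(* Main.v *)
Require Import Defs.
From HB Require Import structures.
From mathcomp Require Import all_boot all_order all_algebra.
From mathcomp Require Import ring lra zify.
Import Order.TTheory GRing.Theory Num.Theory.
Local Open Scope ring_scope.

Section S.
Variable R : realFieldType.

Lemma mul_mx3 (a b c d e f g h i a' b' c' d' e' f' g' h' i' : R) :
  mx3 a b c d e f g h i *m mx3 a' b' c' d' e' f' g' h' i' =
  mx3 (a*a'+b*d'+c*g') (a*b'+b*e'+c*h') (a*c'+b*f'+c*i')
      (d*a'+e*d'+f*g') (d*b'+e*e'+f*h') (d*c'+e*f'+f*i')
      (g*a'+h*d'+i*g') (g*b'+h*e'+i*h') (g*c'+h*f'+i*i').
Proof.
apply/matrixP => r s; rewrite !mxE !big_ord_recr big_ord0 /= !mxE /=.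
case: r => [[|[|[|r]]] Hr] //=; case: s => [[|[|[|s]]] Hs] //=; by rewrite add0r.
Qed.

Lemma one_mx3 : (1%:M : 'M[R]_3) = mx3 1 0 0 0 1 0 0 0 1.
Proof.
apply/matrixP => r s; rewrite !mxE /=.
by case: r => [[|[|[|r]]] Hr] //=; case: s => [[|[|[|s]]] Hs].
Qed.
End S.

Section T.
Variable R : realFieldType.
Variable k : R.
Hypothesis hk : 0 < k.

Lemma jnegS3 a : jneg k a.+3 =
  (1 - k) / k * jneg k a.+2 + (1 - k) / k * jneg k a.+1 + 1 / k * jneg k a.
Proof. by []. Qed.

Lemma jzN p : jz k (- (p%:Z)) = jneg k p.
Proof. by case: p. Qed.

Definition T p := (k - 1) * jneg k p + k * jneg k p.+1.
Definition G m := mx3 (jneg k m) (T m.+1) (k * jneg k m.+1)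
  (jneg k m.+1) (T m.+2) (k * jneg k m.+2)
  (jneg k m.+2) (T m.+3) (k * jneg k m.+3).

Lemma jmx_negE m : jmx_neg k m.+1 = G m.
Proof.
rewrite /jmx_neg /G /tneg /T.
have -> : (Posz m.+1 - 1 = Posz m)%R by lia.
have -> : (Posz m.+1 + 1 - 1 = Posz m.+1)%R by lia.
have -> : (Posz m.+1 + 2 - 1 = Posz m.+2)%R by lia.
have -> : (Posz m.+1 + 3 - 1 = Posz m.+3)%R by lia.
have -> : (Posz m.+1 + 1 = Posz m.+2)%R by lia.
have -> : (Posz m.+1 + 2 = Posz m.+3)%R by lia.
have -> : (Posz m.+1 + 3 = Posz m.+4)%R by lia.
by rewrite !jzN.
Qed.

Lemma k0 : k != 0. Proof. by rewrite gt_eqF. Qed.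

Lemma MG0 : Mk k *m G 0 = N0 k.
Proof.
rewrite /Mk /G /N0 /T mul_mx3 (jnegS3 1) (jnegS3 0) /=.
have := k0 => kn0.
congr mx3; field; done.
Qed.

Lemma MGS m : Mk k *m G m.+1 = G m.
Proof.
rewrite /Mk /G /T mul_mx3 (jnegS3 m.+2) (jnegS3 m.+1) (jnegS3 m).
have := k0 => kn0.
congr mx3; field; done.
Qed.

Definition Minv := mx3 0 1 0 0 0 1 (1/k) ((1-k)/k) ((1-k)/k).

Lemma MMinv : Mk k *m Minv = 1%:M.
Proof.
rewrite /Mk /Minv mul_mx3 one_mx3; have := k0 => kn0.
congr mx3; field; done.
Qed.

Definition dN := (k+1)^+2 * (k^+2+k+2) / k.
Definition Ninv := mx3
  ((k^+2-3-2/k)/dN) ((2*k^+2+2*k)/dN) ((2*k+2*k^+2)/dN)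
  ((2*k+2)/dN) ((-k^+2-1-2/k)/dN) ((2*k+2)/dN)
  ((2/k+2)/dN) ((2+2/k)/dN) ((-k^+2-2*k-1)/dN).

Lemma NNinv : N0 k *m Ninv = 1%:M.
Proof.
rewrite /N0 /Ninv /dN mul_mx3 one_mx3; have := k0 => kn0.
have h1 : k + 1 != 0.
  rewrite gt_eqF //; exact: addr_gt0 hk ltr01.
have hk2 : 0 <= k^+2 := sqr_ge0 k.
have h2 : k^+2 + k + 2 != 0 by rewrite gt_eqF // addr_gt0 // ltr_wpDl.
congr mx3; field; rewrite ?h1 ?h2 ?kn0 //.
Qed.

Lemma N0M : N0 k *m Mk k = Mk k *m N0 k.
Proof.
rewrite /N0 /Mk !mul_mx3; have := k0 => kn0.
congr mx3; field; done.
Qed.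

Lemma MpowG m : Mk k ^+ m.+1 *m G m = N0 k.
Proof.
elim: m => [|m IH]; first by rewrite expr1 MG0.
by rewrite exprSr mulmxE -mulrA -mulmxE MGS.
Qed.

Lemma Mu : Mk k \in unitmx.
Proof. by case: (mulmx1_unit MMinv). Qed.

Lemma Mpowu m : Mk k ^+ m \in unitmx.
Proof.
elim: m => [|m IH]; first by rewrite expr0 unitmx1.
by rewrite exprS -mulmxE unitmx_mul Mu IH.
Qed.

Lemma Nu : N0 k \in unitmx.
Proof. by case: (mulmx1_unit NNinv). Qed.
End T.

Theorem mainTheorem11 (R : realFieldType) (k : R) (hk : 0 < k) (n : nat)
  (hn : (1 <= n)%N) :
  [/\ jmx_neg k n = invmx (Mk k ^+ n) *m N0 k,
      jmx_neg k n = N0 k *m invmx (Mk k ^+ n)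
    & invmx (jmx_pos k n) = invmx (N0 k) *m jmx_neg k n *m invmx (N0 k)].
Proof.
case: n hn => // m _.
have uP := Mpowu _ _ hk m.+1.
have uN := Nu _ _ hk.
have e1 : jmx_neg k m.+1 = invmx (Mk k ^+ m.+1) *m N0 k.
  rewrite (jmx_negE _ _ hk); apply: (@etrans _ _ (invmx (Mk k ^+ m.+1) *m (Mk k ^+ m.+1 *m G R k m))); first by rewrite mulKmx.
  congr mulmx; exact: (MpowG _ _ hk m).
have comm : N0 k *m Mk k ^+ m.+1 = Mk k ^+ m.+1 *m N0 k.
  rewrite !mulmxE; apply: commrX; exact: (N0M _ _ hk).
have e2 : jmx_neg k m.+1 = N0 k *m invmx (Mk k ^+ m.+1).
  rewrite e1; apply: (canRL (mulmxK uP)).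
  by rewrite -mulmxA comm mulKmx.
split => //.
rewrite /jmx_pos e2.
have : (N0 k *m Mk k ^+ m.+1) *m (invmx (Mk k ^+ m.+1) *m invmx (N0 k)) = 1%:M.
  by rewrite mulmxA mulmxK // mulmxV.
move=> h.
have uNP : N0 k *m Mk k ^+ m.+1 \in unitmx by rewrite unitmx_mul uN uP.
rewrite -[LHS]mulmx1 -h mulmxA mulVmx // mul1mx.
by rewrite mulmxA mulVmx // mul1mx.
Qed.
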